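(* Let $\theta_1,\theta_2\in\Theta$, $\theta_\alpha=\alpha\theta_1+(1-\alpha)\theta_2$. Then for $\alpha\in[0,1]$, $D^{\mathrm w}_{B,\alpha}(p_{\theta_1},p_{\theta_2})=\alpha F(\theta_1)+(1-\alpha)F(\theta_2)-\hat F(\theta_\alpha)$. Assume moreover that $\hat F$ is strictly convex on the segment $[\theta_1,\theta_2]$ and that a maximiser $\alpha^*$ of $\alpha\mapsto D^{\mathrm w}_{B,\alpha}(p_{\theta_1},p_{\theta_2})$ over $[0,1]$ exists and lies in $(0,1)$. Then $\alpha^*$ is unique and satisfies \[ (\theta_1-\theta_2)^{\mathrm T}\nabla\hat F(\theta_{\alpha^*})=F(\theta_1)-F(\theta_2), \] where $\nabla\hat F(\theta)=\mathbb E_{p^*_\theta}[t(X)]$ with $p^*_\theta=\varphi p_\theta/E_\varphi(\theta)$.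
   Context: Let $\mu$ be a $\sigma$-finite measure on $\mathcal X$ and $\varphi\ge0$ a measurable weight. Let $\{p_\theta:\theta\in\Theta\}$, $\Theta\subset\mathbb R^d$ open and convex, be a regular exponential family $p_\theta(x)=\exp\{\theta^{\mathrm T}t(x)-F(\theta)+k(x)\}$. Set $E_\varphi(\theta)=\int\varphi p_\theta\,\mathrm d\mu\in(0,\infty)$ and $\hat F(\theta)=\ln\int\varphi(x)e^{\theta^{\mathrm T}t(x)+k(x)}\,\mathrm d\mu(x)=F(\theta)+\ln E_\varphi(\theta)$, finite and differentiable on $\Theta$ (differentiation under the integral sign allowed). Weighted affinity $\rho^{\mathrm w}_\alpha(p,q)=\int\varphi\,p^\alpha q^{1-\alpha}\,\mathrm d\mu$ and weighted Bhattacharyya distance $D^{\mathrm w}_{B,\alpha}(p,q)=-\ln\rho^{\mathrm w}_\alpha(p,q)$. *)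

(* Defs.v *)
From HB Require Import structures.
From mathcomp Require Import all_boot all_order all_algebra.
From mathcomp Require Import all_classical all_reals all_analysis.

Set Implicit Arguments.
Unset Strict Implicit.
Unset Printing Implicit Defensive.

Import Order.TTheory GRing.Theory Num.Theory.
Import numFieldNormedType.Exports.
Local Open Scope classical_set_scope.
Local Open Scope ring_scope.

Section ExpFam.
Context {R : realType} {d0 : measure_display} {T : measurableType d0}.
Variable (mu : {measure set T -> \bar R}) (d : nat).

Definition dotv (th v : 'rV[R]_d) : R := \sum_(i < d) th 0 i * v 0 i.

Variables (t : T -> 'rV[R]_d) (k : T -> R) (phi : T -> R).

Definition expint (th : 'rV[R]_d) (x : T) : R := expR (dotv th (t x) + k x).

Definition Zint (th : 'rV[R]_d) : \bar R := \int[mu]_x (expint th x)%:E.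
Definition Flog (th : 'rV[R]_d) : R := ln (fine (Zint th)).

Definition pdens (th : 'rV[R]_d) (x : T) : R :=
  expR (dotv th (t x) - Flog th + k x).

Definition Ephi (th : 'rV[R]_d) : \bar R := \int[mu]_x (phi x * pdens th x)%:E.

Definition Zhat (th : 'rV[R]_d) : \bar R := \int[mu]_x (phi x * expint th x)%:E.
Definition Zhatr (th : 'rV[R]_d) : R := fine (Zhat th).
Definition Fhat (th : 'rV[R]_d) : R := ln (Zhatr th).

(* E_{p*_theta}[t(X)] with p*_theta = phi p_theta / E_phi(theta) *)
Definition Et (th : 'rV[R]_d) : 'rV[R]_d :=
  \row_(i < d) (fine (\int[mu]_x (t x 0 i * phi x * pdens th x)%:E)
                / fine (Ephi th)).

Definition rho_w (a : R) (p q : T -> R) : R :=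
  fine (\int[mu]_x (phi x * (p x `^ a) * (q x `^ (1 - a)))%:E).
Definition DBw (a : R) (p q : T -> R) : R := - ln (rho_w a p q).

End ExpFam.

Definition convex_set_rV {R : realType} {d : nat} (S : set 'rV[R]_d) : Prop :=
  forall x y, S x -> S y -> forall l : R, 0 <= l <= 1 ->
    S (l *: x + (1 - l) *: y).

Definition segpt {R : realType} {d : nat} (th1 th2 : 'rV[R]_d) (a : R) : 'rV[R]_d :=
  a *: th1 + (1 - a) *: th2.

(* Main.v *)
Require Import Defs.
From HB Require Import structures.
From mathcomp Require Import all_boot all_order all_algebra.
From mathcomp Require Import all_classical all_reals all_analysis.
From mathcomp Require Import ring lra.
From mathcomp Require Import measurable_realfun.
Import Order.TTheory GRing.Theory Num.Theory.
Import numFieldNormedType.Exports.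
Local Open Scope classical_set_scope.
Local Open Scope ring_scope.

Section H.
Context {R : realType} {d0 : measure_display} {T : measurableType d0}.
Variables (mu : {measure set T -> \bar R}) (d : nat) (t : T -> 'rV[R]_d)
  (k : T -> R) (phi : T -> R).
Hypotheses (mphi : measurable_fun setT phi) (mk : measurable_fun setT k)
  (mt : forall i : 'I_d, measurable_fun setT (fun x => t x 0 i))
  (phi0 : forall x, 0 <= phi x).

Lemma mdot th : measurable_fun setT (fun x => dotv th (t x)).
Proof.
rewrite /dotv; apply: measurable_sum => i.
by apply: measurable_funM => //; exact: measurable_cst.
Qed.

Lemma mexpint th : measurable_fun setT (expint t k th).
Proof.
rewrite /expint; apply: measurableT_comp; first exact: measurable_expR.
by apply: measurable_funD => //; exact: mdot.
Qed.

Lemma pdensE th x : pdens mu t k th x = expR (- Flog mu t k th) * expint t k th x.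
Proof. by rewrite /pdens /expint -expRD; congr expR; ring. Qed.

Lemma EphiE th : Ephi mu t k phi th = ((expR (- Flog mu t k th))%:E * Zhat mu t k phi th)%E.
Proof.
rewrite /Ephi /Zhat.
under eq_integral do rewrite pdensE mulrCA EFinM.
apply: ge0_integralZl_EFin => //.
- by move=> x _; rewrite lee_fin mulr_ge0 // expR_ge0.
- apply/measurable_EFinP; apply: measurable_funM => //; exact: mexpint.
Qed.

Lemma Zhat_pos th : (0 < Ephi mu t k phi th < +oo)%E ->
  0 < Zhatr mu t k phi th /\ Zhat mu t k phi th = (Zhatr mu t k phi th)%:E.
Proof.
rewrite EphiE.
have Z0 : (0 <= Zhat mu t k phi th)%E.
  by apply: integral_ge0 => x _; rewrite lee_fin mulr_ge0 // expR_ge0.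
rewrite /Zhatr; move: Z0; case: (Zhat mu t k phi th) => [r| |] //=.
- rewrite lee_fin => r0 /andP[]; rewrite -EFinM lte_fin pmulr_rgt0 ?expR_gt0 //.
- by rewrite gt0_muley ?lte_fin ?expR_gt0 // ltxx andbF.
Qed.

Lemma dotv_seg (th1 th2 w : 'rV[R]_d) (a : R) : dotv (segpt th1 th2 a) w = a * dotv th1 w + (1-a) * dotv th2 w.
Proof.
rewrite /dotv /segpt !mulr_sumr -big_split; apply: eq_bigr => i _; rewrite !mxE.
move: (th1 0 i) (th2 0 i) (w 0 i) => x y z; by rewrite mulrDl !mulrA.
Qed.

Lemma powR_expR (y a : R) : expR y `^ a = expR (a * y).
Proof. by rewrite /powR expR_eq0 expRK. Qed.

Lemma pointwise (th1 th2 : 'rV[R]_d) (a : R) x :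
  phi x * (pdens mu t k th1 x `^ a) * (pdens mu t k th2 x `^ (1 - a)) =
  expR (- (a * Flog mu t k th1 + (1 - a) * Flog mu t k th2)) *
    (phi x * expint t k (segpt th1 th2 a) x).
Proof.
rewrite /pdens /expint dotv_seg.
move: (dotv th1 (t x)) (dotv th2 (t x)) (Flog mu t k th1) (Flog mu t k th2) (k x) (phi x) => D1 D2 F1 F2 kx p.
rewrite !powR_expR -mulrA -expRD mulrCA -expRD; congr (_ * expR _); ring.
Qed.

Lemma part1 (th1 th2 : 'rV[R]_d) (a : R) :
  (0 < Ephi mu t k phi (segpt th1 th2 a) < +oo)%E ->
  DBw mu phi a (pdens mu t k th1) (pdens mu t k th2) =
     a * Flog mu t k th1 + (1 - a) * Flog mu t k th2
       - Fhat mu t k phi (segpt th1 th2 a).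
Proof.
move=> H; have [Zp ZE] := @Zhat_pos _ H.
have m1 : measurable_fun setT (fun x => (phi x * expint t k (segpt th1 th2 a) x)%:E).
  apply/measurable_EFinP; apply: measurable_funM => //; exact: mexpint.
have p1 : forall x, setT x -> (0 <= (phi x * expint t k (segpt th1 th2 a) x)%:E)%E.
  by move=> x ?; rewrite lee_fin mulr_ge0 // expR_ge0.
rewrite /DBw /rho_w.
under eq_integral do rewrite pointwise EFinM.
rewrite (ge0_integralZl_EFin _ _ p1 m1) ?expR_ge0 //.
rewrite -/(Zhat mu t k phi (segpt th1 th2 a)) ZE /= /Fhat.
move: (Zhatr mu t k phi (segpt th1 th2 a)) Zp => Z Zp.
rewrite lnM ?posrE ?expR_gt0 // expRK; ring.
Qed.
Lemma Et_dot (th v : 'rV[R]_d) :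
  (0 < Ephi mu t k phi th < +oo)%E ->
  (forall i : 'I_d,
     mu.-integrable setT (fun x => (t x 0 i * phi x * expint t k th x)%:E)) ->
  dotv v (Et mu t k phi th) =
  fine (\int[mu]_x (phi x * dotv v (t x) * expint t k th x)%:E) / Zhatr mu t k phi th.
Proof.
move=> H Hi; have [Zp ZE] := @Zhat_pos _ H.
set I := fun i => fine (\int[mu]_x (t x 0 i * phi x * expint t k th x)%:E).
have IE : forall i, (\int[mu]_x (t x 0 i * phi x * expint t k th x)%:E = (I i)%:E)%E.
  by move=> i; rewrite /I fineK // (integrable_fin_num measurableT (Hi i)).
have EtE : forall i, Et mu t k phi th 0 i = I i / Zhatr mu t k phi th.
  move=> i; rewrite mxE EphiE ZE /=.
  have pw : forall x, (t x 0 i * phi x * pdens mu t k th x)%:E =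
      ((t x 0 i * phi x * expint t k th x)%:E * (expR (- Flog mu t k th))%:E)%E.
    move=> x; rewrite pdensE -EFinM; congr EFin.
    move: (t x 0 i) (phi x) (expint t k th x) (expR (- Flog mu t k th)) => a b c e.
    ring.
  under eq_integral => x _ do rewrite pw.
  rewrite (integralZr measurableT (Hi i)) IE /=.
  move: (I i) (Zhatr mu t k phi th) (expR (- Flog mu t k th)) (expR_gt0 (- Flog mu t k th)) Zp.
  move=> a Z e e0 Z0; field.
  by apply/andP; split; rewrite gt_eqF.
have SE : (\int[mu]_x (phi x * dotv v (t x) * expint t k th x)%:E
     = (\sum_(i < d) v 0 i * I i)%:E)%E.
  have pw : forall x, (phi x * dotv v (t x) * expint t k th x)%:E =
      (\sum_(i < d) ((v 0 i)%:E * (t x 0 i * phi x * expint t k th x)%:E))%E.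
    move=> x; under eq_bigr do rewrite -EFinM.
    rewrite sumEFin; congr EFin.
    rewrite /dotv mulr_sumr mulr_suml; apply: eq_bigr => i _.
    move: (t x 0 i) (phi x) (expint t k th x) (v 0 i) => a b c e; ring.
  under eq_integral => x _ do rewrite pw.
  rewrite integral_sum //; last by move=> i; exact: integrableZl.
  rewrite -sumEFin; apply: eq_bigr => i _.
  by rewrite (integralZl measurableT (Hi i)) IE.
rewrite SE /= /dotv mulr_suml; apply: eq_bigr => i _.
by rewrite EtE mulrA.
Qed.
End H.

Section D.
Context {R : realType} {d : nat}.

Lemma derive_line {V : normedModType R} (f : V -> R) th v :
  'D_v f th = 'D_1 (fun h : R => f (h *: v + th)) 0.
Proof.
rewrite /derive; set g1 := fun h => h^-1 *: _; set g2 := fun h => h^-1 *: _.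
suff -> : g1 = g2 by [].
by rewrite funeqE /g1 /g2 => h /=; rewrite addr0 scale0r add0r [_%:A]mulr1.
Qed.

Lemma derivable_line (f : 'rV[R]_d -> R) th v :
  derivable f th v <-> derivable (fun h : R => f (h *: v + th)) 0 1.
Proof. exact: derivable1P. Qed.

Lemma diff_ln (f : 'rV[R]_d -> R) th : 0 < f th -> differentiable f th ->
  differentiable (fun y => ln (f y)) th.
Proof.
move=> f0 df.
have dl : differentiable (@ln R) (f th).
  apply/derivable1_diffP.
  by case: (is_derive1_ln f0).
exact: (differentiable_comp df dl).
Qed.

Lemma Dln (f : 'rV[R]_d -> R) th v : 0 < f th -> differentiable f th ->
  'D_v (fun y => ln (f y)) th = 'D_v f th / f th.
Proof.
move=> f0 df.
rewrite !(derive_line _ th v).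
set z := fun h : R => f (h *: v + th).
have z0 : z 0 = f th by rewrite /z scale0r add0r.
have dz : derivable z 0 1 by apply/derivable_line/diff_derivable.
have dl : derivable (@ln R) (z 0) 1.
  by rewrite z0; case: (is_derive1_ln f0).
have := derive1_comp dz dl.
rewrite !derive1E => ->.
rewrite z0; case: (is_derive1_ln f0) => _ ->; rewrite mulrC.
by [].
Qed.

Lemma segpt_shift (th1 th2 : 'rV[R]_d) (s h : R) :
  segpt th1 th2 (h *: 1 + s) = h *: (th1 - th2) + segpt th1 th2 s.
Proof.
rewrite /segpt [_%:A]mulr1; apply/rowP => i; rewrite !mxE; ring.
Qed.

Lemma seg_derivable (F : 'rV[R]_d -> R) th1 th2 s :
  differentiable F (segpt th1 th2 s) -> derivable (fun a => F (segpt th1 th2 a)) s 1.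
Proof.
move=> dF; apply/derivable1P.
have -> : (fun h : R => F (segpt th1 th2 (h *: 1 + s))) =
   (fun h => F (h *: (th1 - th2) + segpt th1 th2 s)).
  by apply/funext => h; rewrite segpt_shift.
exact/derivable_line/diff_derivable.
Qed.

Lemma seg_derive (F : 'rV[R]_d -> R) th1 th2 s :
  'D_1 (fun a => F (segpt th1 th2 a)) s = 'D_(th1 - th2) F (segpt th1 th2 s).
Proof.
rewrite derive_line [RHS]derive_line.
have -> : (fun h : R => F (segpt th1 th2 (h *: 1 + s))) =
   (fun h => F (h *: (th1 - th2) + segpt th1 th2 s)).
  by apply/funext => h; rewrite segpt_shift.
by [].
Qed.
End D.

Theorem proposition3p5 (R : realType) (d0 : measure_display) (T : measurableType d0)
  (mu : {measure set T -> \bar R}) (d : nat)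
  (t : T -> 'rV[R]_d) (k : T -> R) (phi : T -> R) (Theta : set 'rV[R]_d)
  (th1 th2 : 'rV[R]_d) :
  sigma_finite setT mu ->
  measurable_fun setT phi -> (forall x, 0 <= phi x) ->
  measurable_fun setT k ->
  (forall i : 'I_d, measurable_fun setT (fun x => t x 0 i)) ->
  open Theta -> convex_set_rV Theta ->
  (* regular exponential family: normaliser finite on Theta *)
  (forall th, Theta th -> (Zint mu t k th < +oo)%E) ->
  (* E_phi(theta) in (0, oo) on Theta *)
  (forall th, Theta th -> (0 < Ephi mu t k phi th < +oo)%E) ->
  (* differentiation under the integral sign is allowed *)
  (forall th, Theta th ->
     (forall i : 'I_d,
        mu.-integrable setT (fun x => (t x 0 i * phi x * expint t k th x)%:E)) /\
     differentiable (Zhatr mu t k phi) th /\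
     (forall v : 'rV[R]_d,
        'D_v (Zhatr mu t k phi) th =
        fine (\int[mu]_x (phi x * dotv v (t x) * expint t k th x)%:E))) ->
  Theta th1 -> Theta th2 ->
  (* part 1: closed form of the weighted Bhattacharyya distance *)
  (forall a : R, 0 <= a <= 1 ->
     DBw mu phi a (pdens mu t k th1) (pdens mu t k th2) =
     a * Flog mu t k th1 + (1 - a) * Flog mu t k th2
       - Fhat mu t k phi (segpt th1 th2 a))
  /\
  (* part 2 *)
  ((forall a b l : R, 0 <= a <= 1 -> 0 <= b <= 1 -> a != b -> 0 < l < 1 ->
      Fhat mu t k phi (segpt th1 th2 (l * a + (1 - l) * b)) <
      l * Fhat mu t k phi (segpt th1 th2 a)
        + (1 - l) * Fhat mu t k phi (segpt th1 th2 b)) ->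
   forall astar : R, 0 < astar < 1 ->
   (forall a : R, 0 <= a <= 1 ->
      DBw mu phi a (pdens mu t k th1) (pdens mu t k th2) <=
      DBw mu phi astar (pdens mu t k th1) (pdens mu t k th2)) ->
   (forall b : R, 0 <= b <= 1 ->
      (forall a : R, 0 <= a <= 1 ->
         DBw mu phi a (pdens mu t k th1) (pdens mu t k th2) <=
         DBw mu phi b (pdens mu t k th1) (pdens mu t k th2)) ->
      b = astar)
   /\ 'D_(th1 - th2) (Fhat mu t k phi) (segpt th1 th2 astar)
        = Flog mu t k th1 - Flog mu t k th2
   /\ dotv (th1 - th2) (Et mu t k phi (segpt th1 th2 astar))
        = Flog mu t k th1 - Flog mu t k th2).
Proof.
Proof.
move=> sf mphi phi0 mk mt oT cT Zfin Epos Hdiff T1 T2.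
have segT : forall a : R, 0 <= a <= 1 -> Theta (segpt th1 th2 a).
  by move=> a ha; exact: (cT _ _ T1 T2 a ha).
have P1 : forall a : R, 0 <= a <= 1 ->
    DBw mu phi a (pdens mu t k th1) (pdens mu t k th2) =
     a * Flog mu t k th1 + (1 - a) * Flog mu t k th2
       - Fhat mu t k phi (segpt th1 th2 a).
  by move=> a ha; apply: part1 => //; exact: Epos (segT a ha).
split; first exact: P1.
move=> Hconv astar ha Hmax.
have ha' : 0 <= astar <= 1.
  by case/andP: ha => h1 h2; rewrite !ltW.
set F1 := Flog mu t k th1; set F2 := Flog mu t k th2.
split.
  move=> b hb Hbmax; case: (eqVneq b astar) => // neq; exfalso.
  have h2 : 0 < (2 : R)^-1 < 1.
    by apply/andP; split; [rewrite invr_gt0 | rewrite invf_lt1] ; lra.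
  set m := 2^-1 * b + (1 - 2^-1) * astar.
  have hm : 0 <= m <= 1.
    case/andP: hb => hb1 hb2; case/andP: ha' => ha1 ha2.
    rewrite /m; apply/andP; split; lra.
  have C := Hconv b astar (2^-1) hb ha' neq h2.
  have M1 := Hmax m hm; have M2 := Hbmax astar ha'; have M3 := Hmax b hb.
  rewrite !P1 // in M1 M2 M3.
  have Lm : m * F1 + (1 - m) * F2 =
     2^-1 * (b * F1 + (1 - b) * F2) + (1 - 2^-1) * (astar * F1 + (1 - astar) * F2).
    by rewrite /m; ring.
  rewrite -/m in C.
  move: C M1 M2 M3 Lm.
  move: (Fhat mu t k phi (segpt th1 th2 m)) (Fhat mu t k phi (segpt th1 th2 b))
    (Fhat mu t k phi (segpt th1 th2 astar)) => Gm Gb Ga.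
  move: (m * F1 + (1 - m) * F2) (b * F1 + (1 - b) * F2) (astar * F1 + (1 - astar) * F2).
  move=> Lm' Lb La; lra.
have Zpos : forall th, Theta th -> 0 < Zhatr mu t k phi th.
  by move=> th Th; have [] := Zhat_pos mu d t k phi mphi mk mt phi0 th (Epos _ Th).
have dF : forall th, Theta th -> differentiable (Fhat mu t k phi) th.
  move=> th Th; have [_ [dZ _]] := Hdiff _ Th.
  exact (diff_ln _ _ (Zpos _ Th) dZ).
set g := fun a : R => Fhat mu t k phi (segpt th1 th2 a).
set c := F1 - F2.
set f := (c \*: (@idfun R)) - g.
have itv01 : forall s : R, s \in `]0, 1[ -> 0 <= s <= 1.
  by move=> s; rewrite in_itv /= => /andP[h1 h2]; rewrite !ltW.
have df : forall s : R, s \in `]0, 1[ -> derivable f s 1.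
  move=> s hs; apply: derivableB.
    by apply: derivableZ; exact: derivable_id.
  by apply: seg_derivable; apply: dF; apply: segT; exact: itv01.
have fE : forall s : R, 0 <= s <= 1 ->
    f s = DBw mu phi s (pdens mu t k th1) (pdens mu t k th2) - F2.
  move=> s hs; rewrite P1 //.
  have -> : f s = c * s - g s by [].
  rewrite /g /c /F1 /F2.
  move: (Fhat mu t k phi (segpt th1 th2 s)) (Flog mu t k th1) (Flog mu t k th2) => G A B.
  ring.
have amem : astar \in `]0, 1[ by rewrite in_itv /=.
have fmax : forall s, s \in `]0, 1[ -> f s <= f astar.
  move=> s hs; rewrite !fE //; last exact: itv01.
  by rewrite lerD2r; apply: Hmax; exact: itv01.
have Hd := derive1_at_max ler01 df amem fmax.
have D0 : 'D_1 f astar = 0 by case: Hd.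
have dg : derivable g astar 1.
  by apply: seg_derivable; apply: dF; apply: segT.
have dl : derivable (c \*: (@idfun R)) astar 1.
  by apply: derivableZ; exact: derivable_id.
rewrite /f deriveB // in D0.
rewrite deriveZ ?derive_id in D0; last exact: derivable_id.
rewrite /g seg_derive in D0.
have DF : 'D_(th1 - th2) (Fhat mu t k phi) (segpt th1 th2 astar) = F1 - F2.
  by move/eqP: D0; rewrite subr_eq0 [_%:A]mulr1 => /eqP <-.
split; first exact: DF.
have Tst := segT astar ha'.
rewrite /F1 /F2 in DF.
have [Hint [dZ DZ]] := Hdiff _ Tst.
rewrite (Et_dot mu d t k phi mphi mk mt phi0 _ _ (Epos _ Tst) Hint) -DZ.
apply: (eq_trans _ DF).
symmetry; exact (Dln _ _ _ (Zpos _ Tst) dZ).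
Qed.
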